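(* For every reverse semistandard Young tableau $V$, the right row-filling algorithm $\psi(V)$ is a well-defined element of $\mathrm{qKT}^{(1)}$, and $\psi:\mathrm{revSSYT}\to\mathrm{qKT}^{(1)}$ is a bijection with inverse $\phi$. Both maps preserve column sets.
   Context: $\mathrm{revSSYT}$ is the set of reverse semistandard Young tableaux of all partition shapes (English notation; positive integer entries; rows weakly decreasing left to right, columns strictly decreasing top to bottom). The $c$th column set of a tableau or filling is the set of entries in its $c$th column. For a weak composition $a$, $D(a)$ has $a_i$ left-justified boxes in row $i$, row 1 lowest. A quasi-key tableau of shape $a$ is a filling of $D(a)$ with positive integers such that (1) entries weakly decrease along rows and no entry of row $i$ exceeds $i$; (2) entries in each column are distinct and increase going up the first column; (3) if an entry $i$ is above an entry $k$ in the same column with $i<k$, there is an entry $j$ immediately right of $k$ with $i<j$; (4) for two rows with the higher row strictly longer, if $i$ is in column $c$ of the lower row and $j$ in column $c+1$ of the higher row, then $i<j$. $\mathrm{qKT}^{(1)}$ is the set of all quasi-key tableaux (of all shapes $a$) whose first-column entries equal their row indices. $\phi(T)$ for $T\in\mathrm{qKT}^{(1)}$: the top-justified tableau whose $c$th column consists of the entries of column $c$ of $T$ sorted decreasingly from top to bottom. Right row-filling $\psi(V)$: let $C_1,C_2,\ldots$ be the column sets of $V$. Repeat until all are empty: let $k$ be the largest index with $C_k$ nonempty; choose the smallest element $y_k$ of $C_k$; for $c=k-1,\ldots,1$ choose the smallest element $y_c$ of $C_c$ with $y_c\ge y_{c+1}$; make $(y_1,\ldots,y_k)$ (left to right) the row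 of index $y_1$ of the output filling; delete $y_1,\ldots,y_k$ from their column sets. The output is a filling of a skyline diagram. *)

(* Defs.v *)
From mathcomp Require Import all_boot.
Set Implicit Arguments.
Unset Strict Implicit.
Unset Printing Implicit Defensive.

(* A tableau / filling is a list of rows, each row a list of entries read
   left to right.  Columns are 1-indexed. *)

Definition colset (T : seq (seq nat)) (c : nat) : seq nat :=
  [seq nth 0 r c.-1 | r <- T & 0 < c <= size r].

(* ---------- Reverse semistandard Young tableaux (English notation) -------
   V lists the rows from top to bottom. *)
Definition revSSYT (V : seq (seq nat)) : Prop :=
  [/\ all (fun r => r != [::]) V,
      sorted geq (map size V),
      all (all (fun x => 0 < x)) V,
      all (sorted geq) V &
      forall i c, c < size (nth [::] V i.+1) ->
        nth 0 (nth [::] V i.+1) c < nth 0 (nth [::] V i) c].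

(* ---------- Fillings of skyline diagrams D(a) -------------------------------
   F lists the rows from the bottom (row 1) upwards; row i (1-indexed) is
   nth [::] F i.-1, and a_i = size of row i. *)
Definition frow (F : seq (seq nat)) (i : nat) : seq nat := nth [::] F i.-1.
Definition fent (F : seq (seq nat)) (i c : nat) : nat := nth 0 (frow F i) c.-1.
Definition fcell (F : seq (seq nat)) (i c : nat) : bool :=
  (0 < i <= size F) && (0 < c <= size (frow F i)).

Definition qKT (F : seq (seq nat)) : Prop :=
  (forall i c, fcell F i c -> 0 < fent F i c <= i) /\
  (forall i, sorted geq (frow F i)) /\
  (forall i j c, fcell F i c -> fcell F j c -> i != j ->
     fent F i c != fent F j c) /\
  (forall i j, i < j -> fcell F i 1 -> fcell F j 1 ->
     fent F i 1 < fent F j 1) /\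
  (* (3) if entry x (row q) is above entry k (row p < q) in the same column
         and x < k, then there is an entry y immediately right of k, x < y *)
  (forall p q c, p < q -> fcell F p c -> fcell F q c ->
     fent F q c < fent F p c ->
     fcell F p c.+1 && (fent F q c < fent F p c.+1)) /\
  (* (4) lower row p, higher row q strictly longer: entry in column c of row p
         is less than entry in column c+1 of row q *)
  (forall p q c, p < q -> size (frow F p) < size (frow F q) ->
     fcell F p c -> fcell F q c.+1 -> fent F p c < fent F q c.+1).

(* qKT^(1): canonical representative of the weak composition (no trailing
   empty rows) and first-column entries equal their row indices. *)
Definition qKT1 (F : seq (seq nat)) : Prop :=
  qKT F /\ (F = [::] \/ last [::] F <> [::]) /\
  (forall i, fcell F i 1 -> fent F i 1 = i).

Definition ncols (T : seq (seq nat)) : nat := foldr maxn 0 (map size T).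

Definition phi (T : seq (seq nat)) : seq (seq nat) :=
  let cols := mkseq (fun c => sort geq (colset T c.+1)) (ncols T) in
  mkseq (fun r => [seq nth 0 C r | C <- cols & r < size C])
        (foldr maxn 0 (map size cols)).

Definition omin (s : seq nat) : option nat :=
  if s is x :: s' then Some (foldr minn x s') else None.

Fixpoint trim (s : seq (seq nat)) : seq (seq nat) :=
  if s is x :: s' then
    let t := trim s' in if (t == [::]) && (x == [::]) then [::] else x :: t
  else [::].

(* Given the column sets C_k, C_{k-1}, ..., C_1 (reversed) and a lower bound b,
   choose y_k = min C_k (b = 0), then y_c = min {x in C_c | x >= y_{c+1}}.
   Returns [:: y_k; ...; y_1], or None if some choice is impossible. *)
Fixpoint pick_chain (b : nat) (rcs : seq (seq nat)) : option (seq nat) :=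
  match rcs with
  | [::] => Some [::]
  | C :: rcs' =>
      match omin [seq x <- C | b <= x] with
      | None => None
      | Some y =>
          match pick_chain y rcs' with
          | None => None
          | Some ys => Some (y :: ys)
          end
      end
  end.

Fixpoint psi_rows (fuel : nat) (cols : seq (seq nat)) : option (seq (seq nat)) :=
  let tc := trim cols in
  if tc is [::] then Some [::] else
  match fuel with
  | 0 => None
  | n.+1 =>
      match pick_chain 0 (rev tc) with
      | None => None
      | Some ys =>
          let row := rev ys in
          let cols' := map (fun p => rem p.1 p.2) (zip row tc) in
          match psi_rows n cols' with
          | None => None
          | Some rs => Some (row :: rs)
          end
      end
  end.

(* Place each row (y_1,...,y_k) as row number y_1 of a skyline filling
   (rows listed bottom to top, unused rows empty). *)
Definition place_rows (R : seq (seq nat)) : seq (seq nat) :=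
  mkseq (fun i => nth [::] R (find (fun r => head 0 r == i.+1) R))
        (foldr maxn 0 (map (head 0) R)).

(* psi V: None when the algorithm is not well defined (a choice fails, or two
   produced rows would get the same row index, or an index 0). *)
Definition psi (V : seq (seq nat)) : option (seq (seq nat)) :=
  let cols := mkseq (fun c => colset V c.+1) (ncols V) in
  match psi_rows (sumn (map size V)) cols with
  | None => None
  | Some R =>
      if uniq (map (head 0) R) && all (fun r => 0 < head 0 r) R
      then Some (place_rows R) else None
  end.

(* Main.v *)
Require Import Defs.
From mathcomp Require Import all_boot zify.
Set Implicit Arguments.
Unset Strict Implicit.
Unset Printing Implicit Defensive.

Definition col (T : seq (seq nat)) (c : nat) : seq nat :=
  [seq nth 0 r c | r <- T & c < size r].

Lemma colsetS T c : colset T c.+1 = col T c.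
Proof. by rewrite /colset /col. Qed.

Lemma colset0 T : colset T 0 = [::].
Proof. by rewrite /colset; elim: T. Qed.

Lemma col_cons r T c : col (r :: T) c =
  if c < size r then nth 0 r c :: col T c else col T c.
Proof. by rewrite /col /=; case: ifP. Qed.

Lemma geq_trans : transitive geq.
Proof. by move=> a b c /= h1 h2; apply: leq_trans h2 h1. Qed.

Lemma sgeq_nth r i j : sorted geq r -> i <= j -> j < size r -> nth 0 r j <= nth 0 r i.
Proof.
move=> s ij js.
have := sorted_leq_nth geq_trans (fun x => leqnn x) 0 s.
by move=> /(_ i j); apply => //; rewrite inE; apply: leq_ltn_trans js.
Qed.

Lemma sgeq_head r x : sorted geq r -> x \in r -> x <= head 0 r.
Proof.
move=> s /(nthP 0) [i ir <-]; rewrite -nth0; exact: sgeq_nth.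
Qed.

Lemma SC s t r : sorted geq s ->
  (r < count (fun x => t <= x) s) = (r < size s) && (t <= nth 0 s r).
Proof.
elim: s r => [|x s IH] r //= P.
have Ps : sorted geq s := path_sorted P.
have Hall : all (geq x) s := order_path_min geq_trans P.
case: (leqP t x) => tx.
  by case: r => [|r] //=; rewrite add1n ?ltnS ?IH.
have c0 : count (fun y => t <= y) s = 0.
  apply/eqP; rewrite -leqn0 leqNgt -has_count; apply/hasPn => y ys.
  move/allP: Hall => /(_ y ys) /= yx; rewrite -ltnNge; exact: leq_ltn_trans yx tx.
rewrite c0 /=; case: r => [|r] /=; first by rewrite (leqNgt t x) tx.
rewrite ltnS.
case: (ltnP r (size s)) => // rs.
have : nth 0 s r <= x by move/allP: Hall => /(_ _ (mem_nth 0 rs)).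
by move=> h; apply/esym/negbTE; rewrite -ltnNge; apply: leq_ltn_trans h tx.
Qed.

Definition dom (B A : seq nat) := forall t,
  count (fun x => t <= x) B <= count (fun x => t <= x) A.

Lemma dom_sort B A r : dom B A -> r < size B ->
  nth 0 (sort geq B) r <= nth 0 (sort geq A) r.
Proof.
move=> D rB.
set t := nth 0 (sort geq B) r.
have sB := sort_sorted (fun a b => leq_total b a) B.
have sA := sort_sorted (fun a b => leq_total b a) A.
have h1 : r < count (fun x => t <= x) (sort geq B).
  by rewrite SC // size_sort rB leqnn.
have h2 : r < count (fun x => t <= x) (sort geq A).
  rewrite (permP (permEl (perm_sort geq A))); apply: leq_trans (D t).
  by rewrite -(permP (permEl (perm_sort geq B))).
by move: h2; rewrite SC // => /andP[].
Qed.

Lemma dom_col X c t : (forall r, r \in X -> sorted geq r) ->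
  count (fun x => t <= x) (col X c.+1) <= count (fun x => t <= x) (col X c).
Proof.
elim: X => [|r X IH] //= H.
rewrite !col_cons.
have IH' := IH (fun r' h => H r' (mem_behead (s:=r::X) h)).
have Sr := H r (mem_head _ _).
case: (ltnP c.+1 (size r)) => h1.
  rewrite (ltnW h1) /=; apply: leq_add => //.
  case: (leqP t (nth 0 r c.+1)) => // h2.
  by rewrite (leq_trans h2 (sgeq_nth Sr (leqnSn c) h1)).
case: ifP => _ /=; last by [].
exact: leq_trans IH' (leq_addl _ _).
Qed.

Lemma eq_lt_sz a b : (forall i, (i < a) = (i < b)) -> a = b.
Proof.
move=> H; apply/anti_leq/andP; split.
  by rewrite leqNgt H ltnn.
by rewrite leqNgt -H ltnn.
Qed.

Lemma le_foldr_max (s : seq nat) x : x \in s -> x <= foldr maxn 0 s.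
Proof.
elim: s => [|y s IH] //; rewrite inE => /orP[/eqP->|h] /=; first exact: leq_maxl.
exact: leq_trans (IH h) (leq_maxr _ _).
Qed.

Lemma foldr_max_mem (s : seq nat) : 0 < foldr maxn 0 s -> foldr maxn 0 s \in s.
Proof.
elim: s => [|y s IH] // h; rewrite /=.
move: h => /=; case: (leqP (foldr maxn 0 s) y) => h2 h; first by rewrite mem_head.
by rewrite inE IH ?orbT.
Qed.

Lemma foldr_max_sorted (s : seq nat) : sorted geq s -> foldr maxn 0 s = head 0 s.
Proof.
case: s => [|x s] //= P.
have Hall : all (geq x) s := order_path_min geq_trans P.
apply/maxn_idPl; case: (posnP (foldr maxn 0 s)) => [->//|h].
by move/allP: Hall => /(_ _ (foldr_max_mem h)).
Qed.

Lemma sorted_size_head (x : seq nat) s y : sorted geq (map size (x :: s)) -> y \in s -> size y <= size x.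
Proof.
move=> P ys; have := order_path_min geq_trans P.
by move/allP => /(_ (size y) (map_f _ ys)).
Qed.

Lemma pf_size (s : seq (seq nat)) r i : sorted geq (map size s) ->
  (i < size [seq x <- s | r < size x]) = (r < size (nth [::] s i)).
Proof.
elim: s i => [|x s IH] i P /=; first by rewrite nth_nil.
have Ps : sorted geq (map size s) by case: s P {IH} => //= y s /andP[].
case: ifP => hx /=.
  by case: i => [|i] //=; rewrite ltnS IH.
have -> : [seq y <- s | r < size y] = [::].
  apply/eqP; rewrite -size_eq0 size_filter; apply/eqP/eqP; rewrite -leqn0 leqNgt -has_count.
  apply/hasPn => y ys; apply/negbT; apply: contraFF hx => h.
  exact: leq_trans h (sorted_size_head P ys).
case: i => [|i] /=; first by rewrite hx.
case: (ltnP i (size s)) => hi; last by rewrite nth_default.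
apply/esym/negbTE; apply: contraFN hx => h.
exact: leq_trans h (sorted_size_head P (mem_nth [::] hi)).
Qed.

Lemma pf_nth (s : seq (seq nat)) r i : sorted geq (map size s) ->
  i < size [seq x <- s | r < size x] ->
  nth [::] [seq x <- s | r < size x] i = nth [::] s i.
Proof.
elim: s i => [|x s IH] i P //=.
have Ps : sorted geq (map size s) by case: s P {IH} => //= y s /andP[].
case: ifP => hx /=.
  by case: i => [|i] //= h; rewrite IH.
move=> h; exfalso; move: h; rewrite pf_size //.
have [hi|hi] := ltnP i (size s); last by rewrite nth_default.
apply/negP; apply: contraFN hx => h.
exact: leq_trans h (sorted_size_head P (mem_nth [::] hi)).
Qed.

Lemma col_size X c i : sorted geq (map size X) ->
  (i < size (col X c)) = (c < size (nth [::] X i)).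
Proof. by move=> P; rewrite /col size_map pf_size. Qed.

Lemma col_nth X c i : sorted geq (map size X) -> i < size (col X c) ->
  nth 0 (col X c) i = nth 0 (nth [::] X i) c.
Proof.
move=> P h; have h' : i < size [seq x <- X | c < size x] by move: h; rewrite /col size_map.
by rewrite /col (nth_map [::]) ?pf_nth.
Qed.

Definition shape (X : seq (seq nat)) :=
  all (fun r => r != [::]) X && sorted geq (map size X).

Lemma col0_shape X : all (fun r => r != [::]) X -> size (col X 0) = size X.
Proof.
move=> H; rewrite /col size_map; congr size; apply/all_filterP.
by apply/allP => r /(allP H); case: r.
Qed.

Lemma shape_eq X Y : shape X -> shape Y -> (forall c, col X c = col Y c) -> X = Y.
Proof.
move=> /andP[nX sX] /andP[nY sY] H.
have sz : size X = size Y by rewrite -col0_shape // -col0_shape // H.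
apply: (eq_from_nth (x0 := [::])) => // i hi.
have szi : size (nth [::] X i) = size (nth [::] Y i).
  by apply: eq_lt_sz => c; rewrite -col_size // -col_size // H.
apply: (eq_from_nth (x0 := 0)) => // c hc.
have h1 : i < size (col X c) by rewrite col_size.
rewrite -col_nth // H col_nth //; by rewrite -H.
Qed.

Definition tab (cols : seq (seq nat)) : seq (seq nat) :=
  mkseq (fun r => [seq nth 0 C r | C <- cols & r < size C])
        (foldr maxn 0 (map size cols)).

Lemma phiE T : phi T = tab (mkseq (fun c => sort geq (colset T c.+1)) (ncols T)).
Proof. by []. Qed.

Lemma tab_nth cols r : nth [::] (tab cols) r = [seq nth 0 C r | C <- cols & r < size C].
Proof.
rewrite /tab; case: (ltnP r (foldr maxn 0 (map size cols))) => h.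
  by rewrite nth_mkseq.
rewrite nth_default ?size_mkseq //.
apply/esym/eqP; rewrite -size_eq0 size_map size_filter; apply/eqP/eqP.
rewrite -leqn0 leqNgt -has_count; apply/hasPn => C HC; rewrite -leqNgt.
exact: leq_trans (le_foldr_max (map_f size HC)) h.
Qed.

Lemma tab_size cols : sorted geq (map size cols) ->
  size (tab cols) = size (nth [::] cols 0).
Proof.
move=> P; rewrite /tab size_mkseq foldr_max_sorted //.
by case: cols P.
Qed.

Lemma tab_row_size cols r c : sorted geq (map size cols) ->
  (c < size (nth [::] (tab cols) r)) = (r < size (nth [::] cols c)).
Proof. by move=> P; rewrite tab_nth size_map pf_size. Qed.

Lemma tab_row_nth cols r c : sorted geq (map size cols) ->
  c < size (nth [::] (tab cols) r) ->
  nth 0 (nth [::] (tab cols) r) c = nth 0 (nth [::] cols c) r.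
Proof.
move=> P h; have h' : c < size [seq C <- cols | r < size C] by move: h; rewrite tab_nth size_map.
by rewrite tab_nth (nth_map [::]) ?pf_nth.
Qed.

Lemma tab_shape cols : sorted geq (map size cols) -> shape (tab cols).
Proof.
move=> P; apply/andP; split.
  apply/allP => row /(nthP [::]) [r hr <-].
  rewrite -size_eq0 -lt0n tab_row_size //; by rewrite tab_size in hr.
apply/(sortedP 0) => r; rewrite size_map => h.
rewrite !(nth_map [::]) ?(ltnW h) // !tab_nth !size_map !size_filter.
by apply: sub_count => C /= /ltnW.
Qed.

Lemma col_tab cols c : sorted geq (map size cols) ->
  col (tab cols) c = nth [::] cols c.
Proof.
move=> P; have [_ St] := andP (tab_shape P).
have sz : size (col (tab cols) c) = size (nth [::] cols c).
  by apply: eq_lt_sz => i; rewrite col_size // tab_row_size.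
apply: (eq_from_nth (x0 := 0)) => // i hi.
have hc : c < size (nth [::] (tab cols) i) by rewrite -col_size.
by rewrite col_nth // tab_row_nth.
Qed.

Lemma size_col X c : size (col X c) = count (fun r => c < size r) X.
Proof. by rewrite /col size_map size_filter. Qed.

Lemma size_le_ncols X r : r \in X -> size r <= ncols X.
Proof. by move=> h; apply: le_foldr_max; apply: map_f. Qed.

Lemma col_ge_ncols X c : ncols X <= c -> col X c = [::].
Proof.
move=> h; apply/eqP; rewrite -size_eq0 size_col; apply/eqP/eqP.
rewrite -leqn0 leqNgt -has_count; apply/hasPn => r hr; rewrite -leqNgt.
exact: leq_trans (size_le_ncols hr) h.
Qed.

Lemma nth_colsmk X c : nth [::] (mkseq (fun c => colset X c.+1) (ncols X)) c = col X c.
Proof.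
case: (ltnP c (ncols X)) => h; first by rewrite nth_mkseq // colsetS.
by rewrite nth_default ?size_mkseq // col_ge_ncols.
Qed.

Definition phicols X := mkseq (fun c => sort geq (colset X c.+1)) (ncols X).

Lemma nth_phicols X c : nth [::] (phicols X) c = sort geq (col X c).
Proof.
case: (ltnP c (ncols X)) => h; first by rewrite nth_mkseq // colsetS.
by rewrite nth_default ?size_mkseq // col_ge_ncols.
Qed.

Lemma phicols_sorted X : sorted geq (map size (phicols X)).
Proof.
apply/(sortedP 0) => c; rewrite size_map => h.
rewrite !(nth_map [::]) ?(ltnW h) // !nth_phicols !size_sort !size_col.
by apply: sub_count => r /= /ltnW.
Qed.

Lemma col_phi X c : col (phi X) c = sort geq (col X c).
Proof. by rewrite phiE -/(phicols X) col_tab ?nth_phicols // phicols_sorted. Qed.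

Lemma shape_phi X : shape (phi X).
Proof. by rewrite phiE tab_shape // phicols_sorted. Qed.

Lemma strict_nth s i : sorted geq s -> uniq s -> i.+1 < size s ->
  nth 0 s i.+1 < nth 0 s i.
Proof.
move=> S U h; rewrite ltn_neqAle sgeq_nth ?leqnSn // andbT.
by rewrite nth_uniq // ?(ltnW h) // neq_ltn ltnSn orbT.
Qed.

Lemma revSSYT_phi T : (forall r, r \in T -> sorted geq r) ->
  (forall c, uniq (col T c)) -> (forall c, all (fun x => 0 < x) (col T c)) ->
  revSSYT (phi T).
Proof.
move=> S U P.
have SC := phicols_sorted T.
have [nV sV] := andP (shape_phi T).
have ent : forall r c, c < size (nth [::] (phi T) r) ->
    r < size (sort geq (col T c)) /\
    nth 0 (nth [::] (phi T) r) c = nth 0 (sort geq (col T c)) r.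
  move=> r c h; rewrite phiE -/(phicols T) in h *.
  by rewrite tab_row_nth // nth_phicols; split => //; rewrite -nth_phicols -tab_row_size.
have sortS : forall c, sorted geq (sort geq (col T c)).
  by move=> c; apply: (sort_sorted (fun a b => leq_total b a)).
split => //.
- apply/allP => row /(nthP [::]) [r hr <-]; apply/allP => x /(nthP 0) [c hc <-].
  have [h1 ->] := ent r c hc.
  by move/allP: (P c); apply; rewrite -(mem_sort geq) mem_nth.
- apply/allP => row /(nthP [::]) [r hr <-]; apply/(sortedP 0) => c hc.
  have [h1 ->] := ent r c (ltnW hc).
  have [h2 ->] := ent r c.+1 hc.
  apply: dom_sort; last by rewrite size_sort in h2.
  by move=> t; apply: dom_col.
- move=> i c hc.
  have [h1 ->] := ent i.+1 c hc.
  have hc' : c < size (nth [::] (phi T) i).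
    rewrite phiE -/(phicols T) tab_row_size // nth_phicols; exact: ltn_trans (ltnSn i) h1.
  have [h2 ->] := ent i c hc'.
  by apply: strict_nth => //; rewrite sort_uniq.
Qed.

Lemma revSSYT_col_strict V c i : revSSYT V -> i.+1 < size (col V c) ->
  nth 0 (col V c) i.+1 < nth 0 (col V c) i.
Proof.
case=> _ sV _ _ H h.
have h' : c < size (nth [::] V i.+1) by rewrite -col_size.
rewrite !col_nth //; first exact: H.
exact: ltn_trans h.
Qed.

Lemma revSSYT_col_sorted V c : revSSYT V -> sorted geq (col V c).
Proof.
move=> R; apply/(sortedP 0) => i h; exact/ltnW/revSSYT_col_strict.
Qed.

Lemma revSSYT_col_uniq V c : revSSYT V -> uniq (col V c).
Proof.
move=> R; apply: (@sorted_uniq _ (fun x y => y < x)).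
- by move=> a b d /= h1 h2; apply: ltn_trans h2 h1.
- by move=> a /=; rewrite ltnn.
apply/(sortedP 0) => i h; exact: revSSYT_col_strict.
Qed.

Lemma revSSYT_shape V : revSSYT V -> shape V.
Proof. by case=> nV sV _ _ _; rewrite /shape nV sV. Qed.

Lemma phi_eq_V F V : revSSYT V -> (forall c, perm_eq (col F c) (col V c)) -> phi F = V.
Proof.
move=> R P; apply: shape_eq; [exact: shape_phi | exact: revSSYT_shape |] => c.
rewrite col_phi; have /perm_sortP -> := P c.
- by rewrite sorted_sort //; [apply: geq_trans | apply: revSSYT_col_sorted].
- by move=> a b; apply: leq_total.
- exact: geq_trans.
- by move=> a b /andP[h1 h2]; apply/anti_leq/andP.
Qed.

Lemma trim_nth s c : nth [::] (trim s) c = nth [::] s c.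
Proof.
elim: s c => [|x s IH] c //=.
case: ifP => [/andP[/eqP E /eqP ->]|_].
  by case: c => [|c] //=; rewrite -IH E nth_nil.
by case: c.
Qed.

Lemma trim_last s : trim s != [::] -> last [::] (trim s) != [::].
Proof.
elim: s => [|x s IH] //=.
case: ifP => //.
case E: (trim s) => [|y t] /=; first by move=> /negbT.
by move=> _ _; have := IH; rewrite E; apply.
Qed.

Lemma perm_rem (x : nat) s t : perm_eq s t -> perm_eq (rem x s) (rem x t).
Proof.
move=> P; case: (boolP (x \in s)) => h.
  have h' : x \in t by rewrite -(perm_mem P).
  rewrite -(perm_cons x); apply: (@perm_trans _ t); last by rewrite perm_to_rem.
  apply: (@perm_trans _ s) => //; by rewrite perm_sym perm_to_rem.
have h' : x \notin t by rewrite -(perm_mem P).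
by rewrite !rem_id.
Qed.

Lemma foldr_min_mem z s : foldr minn z s \in z :: s.
Proof.
elim: s => [|w s IH] /=; first by rewrite mem_head.
rewrite {1}/minn; case: ifP => _; first by rewrite !inE eqxx orbT.
by move: IH; rewrite !inE => /orP[->|->]; rewrite ?orbT.
Qed.

Lemma foldr_min_le z s x : x \in z :: s -> foldr minn z s <= x.
Proof.
elim: s x => [|w s IH] x /=; first by rewrite inE => /eqP->.
rewrite !inE => /or3P[h|/eqP->|h].
- by apply: leq_trans (geq_minr _ _) _; apply: IH; rewrite inE h.
- exact: geq_minl.
- by apply: leq_trans (geq_minr _ _) _; apply: IH; rewrite inE h orbT.
Qed.

Lemma omin_some s y : omin s = Some y -> y \in s /\ forall x, x \in s -> y <= x.
Proof.
case: s => [|z s] //= [<-]; split; first exact: foldr_min_mem.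
by move=> x; apply: foldr_min_le.
Qed.

Lemma omin_none s : omin s = None -> s = [::].
Proof. by case: s. Qed.

Lemma omin_eq s y : y \in s -> (forall x, x \in s -> y <= x) -> omin s = Some y.
Proof.
case E: (omin s) => [z|]; last by rewrite (omin_none E).
move=> ys H; have [zs Hz] := omin_some E.
by congr Some; apply/anti_leq; rewrite Hz // H.
Qed.

Fixpoint grr (b : nat) (rcs : seq (seq nat)) (ys : seq nat) : Prop :=
  match rcs, ys with
  | [::], [::] => True
  | C :: rcs', y :: ys' =>
      [/\ y \in C, b <= y, (forall x, x \in C -> b <= x -> y <= x) & grr y rcs' ys']
  | _, _ => False
  end.

Lemma pick_grr b rcs ys : pick_chain b rcs = Some ys <-> grr b rcs ys.
Proof.
elim: rcs b ys => [|C rcs IH] b ys /=; first by case: ys.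
split.
  case E: (omin _) => [y|] //; case E2: (pick_chain y rcs) => [ys'|] // [<-].
  have [h1 h2] := omin_some E; move: h1; rewrite mem_filter => /andP[h1 h3].
  split => //; last by apply/IH.
  by move=> x xC bx; apply: h2; rewrite mem_filter bx xC.
case: ys => [|y ys'] // [h1 h2 h3 h4].
rewrite (omin_eq (y := y)); last first.
  by move=> x; rewrite mem_filter => /andP[bx xC]; apply: h3.
  by rewrite mem_filter h2 h1.
by have /IH -> := h4.
Qed.

Fixpoint grf (b : nat) (tc : seq (seq nat)) (a : seq nat) : Prop :=
  match tc, a with
  | [::], [::] => True
  | C :: tc', y :: a' =>
      [/\ y \in C, head b a' <= y, (forall x, x \in C -> head b a' <= x -> y <= x) & grf b tc' a']
  | _, _ => False
  end.

Lemma grr_rcons b rcs ys C y : size rcs = size ys ->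
  grr b (rcons rcs C) (rcons ys y) <->
  grr b rcs ys /\ [/\ y \in C, last b ys <= y & (forall x, x \in C -> last b ys <= x -> y <= x)].
Proof.
elim: rcs ys b => [|C' rcs IH] [|y' ys] b //= sz.
  by split; [case=> h1 h2 h3 _; split | case=> _ [h1 h2 h3]; split].
case: sz => sz; split.
  by case=> h1 h2 h3 /(IH _ _ sz) [h4 h5]; split.
by case=> [[h1 h2 h3 h4] h5]; split => //; apply/(IH _ _ sz); split.
Qed.

Lemma grr_size b rcs ys : grr b rcs ys -> size rcs = size ys.
Proof. by elim: rcs b ys => [|C rcs IH] b [|y ys] //= [_ _ _ /IH ->]. Qed.

Lemma grr_grf b tc a : size tc = size a -> (grr b (rev tc) (rev a) <-> grf b tc a).
Proof.
elim: tc a => [|C tc IH] [|y a] //= sz.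

case: sz => sz; rewrite !rev_cons.
have hl : last b (rev a) = head b a by case: a {IH sz} => [|z a] //=; rewrite rev_cons last_rcons.
have H := @grr_rcons b (rev tc) (rev a) C y; rewrite !size_rev hl in H.
have {}H := H sz.
split.
  by move=> /H [/(IH _ sz) h1 [h2 h3 h4]]; split.
by case=> h1 h2 h3 /(IH _ sz) h4; apply/H; split.
Qed.

Definition gr (a : seq nat) (tc : seq (seq nat)) :=
  size a = size tc /\ forall c, c < size tc ->
  [/\ nth 0 a c \in nth [::] tc c, nth 0 a c.+1 <= nth 0 a c &
      forall x, x \in nth [::] tc c -> nth 0 a c.+1 <= x -> nth 0 a c <= x].

Lemma grf_gr tc a : grf 0 tc a <-> gr a tc.
Proof.
elim: tc a => [|C tc IH] [|y a] //=.
all: try by split => //; case.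
all: try by split => // _; split => //.
have hd : head 0 a = nth 0 a 0 by case: a {IH}.
split.
  case=> h1 h2 h3 /IH [sz H]; split; first by rewrite /= sz.
  by case=> [|c] /=; rewrite -?hd //; rewrite ltnS; apply: H.
case=> [[sz] H]; have [h1 h2 h3] := H 0 (ltn0Sn _).
split; rewrite ?hd //; apply/IH; split => // c hc; exact: H c.+1 hc.
Qed.

Lemma pick_gr tc ys : pick_chain 0 (rev tc) = Some ys <-> gr (rev ys) tc.
Proof.
split.
  move=> /pick_grr h; have sz := grr_size h; rewrite size_rev in sz.
  apply/grf_gr/grr_grf; first by rewrite size_rev.
  by rewrite revK.
move=> h; have sz : size tc = size (rev ys) by case: h.
by apply/pick_grr; rewrite -(revK ys); apply/grr_grf => //; apply/grf_gr.
Qed.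

Lemma pick_exists b rcs :
  (forall j, j.+1 < size rcs -> dom (nth [::] rcs j) (nth [::] rcs j.+1)) ->
  (if rcs is C :: _ then has (fun x => b <= x) C else true) ->
  exists ys, pick_chain b rcs = Some ys.
Proof.
elim: rcs b => [|C rcs IH] b /=; first by exists [::].
move=> D hC.
case E: (omin _) => [y|]; last first.
  move: (omin_none E) => /eqP; rewrite -size_eq0 size_filter; move: hC.
  by rewrite has_count => h /eqP h'; rewrite h' in h.
have [ymem ymin] := omin_some E.
move: ymem; rewrite mem_filter => /andP[hby yC].
have [ys ->] : exists ys, pick_chain y rcs = Some ys.
  apply: IH; first by move=> j hj; apply: (D j.+1).
  case: rcs D => [|C' rcs] // D.
  have := D 0 (erefl _) y => /= h.
  rewrite has_count; apply: leq_trans h.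
  by rewrite -has_count; apply/hasP; exists y.
by exists (y :: ys).
Qed.

Definition lowcond (r s : seq nat) : Prop :=
  [/\ forall c, c < size r -> c < size s -> nth 0 r c != nth 0 s c,
      forall c, c < size r -> c < size s -> nth 0 s c < nth 0 r c ->
        c.+1 < size r /\ nth 0 s c < nth 0 r c.+1
    & size r < size s -> forall c, c < size r -> c.+1 < size s ->
        nth 0 r c < nth 0 s c.+1].

Definition compat (r s : seq nat) : Prop := head 0 r < head 0 s -> lowcond r s.

Definition GR (R : seq (seq nat)) : Prop :=
  [/\ forall r, r \in R -> [/\ r != [::], sorted geq r & all (fun x => 0 < x) r],
      uniq (map (head 0) R)
    & forall r s, r \in R -> s \in R -> compat r s].

Lemma add_row a b tc : gr a tc -> sorted geq b -> size b <= size tc ->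
  (forall c, c < size b -> nth 0 b c \in nth [::] tc c /\ nth 0 b c != nth 0 a c) ->
  compat a b /\ compat b a.
Proof.
move=> [sa G] Sb sb Hb.
have G' : forall c, c < size tc -> forall x, x \in nth [::] tc c ->
    nth 0 a c.+1 <= x -> nth 0 a c <= x.
  by move=> c hc; have [_ _ H] := G c hc; exact: H.
have F1 : forall c, c < size b -> nth 0 b c < nth 0 a c.+1 \/ nth 0 a c < nth 0 b c.
  move=> c hc; case: (ltnP (nth 0 b c) (nth 0 a c.+1)) => h; first by left.
  right; have [m ne] := Hb c hc.
  have := G' c (leq_trans hc sb) _ m h.
  by move: ne; lia.
split.
  move=> _; split.
  - by move=> c _ hc; have [_] := Hb c hc; rewrite eq_sym.
  - move=> c hca hcb h; case: (F1 c hcb) => h2; last by lia.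
    split => //; case: (ltnP c.+1 (size a)) => // h3.
    by move: h2; rewrite (nth_default 0 h3).
  - by move=> h; lia.
move=> hba.
have K : forall c, c < size b -> nth 0 b c < nth 0 a c.
  elim=> [|c IH] hc; first by rewrite !nth0.
  have h1 := IH (ltnW hc).
  have h2 : nth 0 b c.+1 <= nth 0 b c by apply: sgeq_nth.
  case: (ltnP (nth 0 b c.+1) (nth 0 a c.+1)) => // h3.
  have := G' c (leq_trans (ltnW hc) sb) (nth 0 b c) (Hb c (ltnW hc)).1 (leq_trans h3 h2).
  by lia.
split.
- by move=> c hc _; rewrite neq_ltn K.
- by move=> c hcb hca h; have := K c hcb; lia.
- move=> _ c hcb hca; case: (F1 c hcb) => // h; have := K c hcb; lia.
Qed.

Lemma uniq_map_inj (T U : eqType) (f : T -> U) s x y :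
  uniq (map f s) -> x \in s -> y \in s -> f x = f y -> x = y.
Proof.
elim: s => [|z s IH] //= /andP[nz us].
rewrite !inE => /orP[/eqP->|xs] /orP[/eqP->|ys] // E.
- by move: nz; rewrite E (map_f f ys).
- by move: nz; rewrite -E (map_f f xs).
- exact: IH.
Qed.

Lemma mem_col X r c : r \in X -> c < size r -> nth 0 r c \in col X c.
Proof. by move=> h1 h2; apply: map_f; rewrite mem_filter h2. Qed.

Lemma colP X c x : x \in col X c -> exists2 r, r \in X & c < size r /\ x = nth 0 r c.
Proof.
by move=> /mapP [r]; rewrite mem_filter => /andP[h1 h2] ->; exists r.
Qed.

Lemma perm_col X Y c : perm_eq X Y -> perm_eq (col X c) (col Y c).
Proof. by move=> P; apply: perm_map; apply: perm_filter. Qed.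

Lemma llrow R0 p : GR R0 -> p \in R0 ->
  (forall q, q \in R0 -> size q <= size p) ->
  (forall q, q \in R0 -> size q = size p -> head 0 p <= head 0 q) ->
  forall c, c < size p -> forall x, x \in col R0 c ->
    nth 0 p c.+1 <= x -> nth 0 p c <= x.
Proof.
move=> [_ U C] pR Hs Hh c hc x /colP [q qR [hq ->]] h.
case: (eqVneq q p) => [->//|qp].
have hqp : head 0 q != head 0 p.
  by apply/eqP => E; move/eqP: qp; apply; apply: (uniq_map_inj U).
case: (ltnP (nth 0 q c) (nth 0 p c)) => // hlt.
case: (ltngtP (head 0 p) (head 0 q)) => hh.
- have [_ C3 _] := C p q pR qR hh.
  have [_ h2] := C3 c hc hq hlt; lia.
- have [_ _ C4] := C q p qR pR hh.
  have hsq : size q < size p.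
    rewrite ltn_neqAle Hs // andbT; apply/eqP => E.
    by have := Hh q qR E; lia.
  have := C4 hsq c hq (leq_ltn_trans hq hsq); lia.
- by move: hqp; rewrite hh eqxx.
Qed.

Lemma nth_newcols a tc c : size a = size tc ->
  nth [::] (map (fun p => rem p.1 p.2) (zip a tc)) c = rem (nth 0 a c) (nth [::] tc c).
Proof.
move=> sz; case: (ltnP c (size tc)) => h.
  rewrite (nth_map (0, [::])) ?size_zip ?sz ?minnn // nth_zip //.
by rewrite !nth_default ?size_map ?size_zip ?sz ?minnn.
Qed.

Lemma psi_rows_nil n cols : trim cols = [::] -> psi_rows n cols = Some [::].
Proof. by case: n => [|n] /= ->. Qed.

Lemma psi_rows_cons n cols ys : trim cols != [::] ->
  pick_chain 0 (rev (trim cols)) = Some ys ->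
  psi_rows n.+1 cols =
  obind (fun rs => Some (rev ys :: rs))
        (psi_rows n (map (fun p => rem p.1 p.2) (zip (rev ys) (trim cols)))).
Proof.
move=> /= ne; case: (trim cols) ne => // C tc _ P /=; rewrite P.
by case: psi_rows.
Qed.

Lemma count_split (a b : pred nat) s :
  count a s = count (fun z => a z && b z) s + count (fun z => a z && ~~ b z) s.
Proof. by elim: s => [|x s IH] //=; rewrite IH; case: (a x); case: (b x) => /=; lia. Qed.

Lemma dom_step A B x y : x \in A -> y \in B -> y <= x ->
  (forall z, z \in A -> y <= z -> x <= z) -> dom B A -> dom (rem y B) (rem x A).
Proof.
move=> xA yB yx G D t; rewrite !count_rem xA yB /=.
have Dt := D t.
case: (leqP t y) => h1.
  rewrite (leq_trans h1 yx) /=.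
  have : 0 < count (fun z => t <= z) B by rewrite -has_count; apply/hasP; exists y.
  lia.
case: (leqP t x) => h2 /=; last by rewrite !subn0.
have E : count (fun z => t <= z) A = count (fun z => y <= z) A.
  apply: eq_in_count => z zA /=.
  apply/idP/idP => h; first by lia.
  by have := G z zA h; lia.
have := count_split (fun z => y <= z) (fun z => t <= z) B.
have -> : count (fun z => (y <= z) && (t <= z)) B = count (fun z => t <= z) B.
  by apply: eq_count => z /=; apply/idP/idP; [case/andP | move=> h; rewrite h andbT; lia].
have : 0 < count (fun z => (y <= z) && ~~ (t <= z)) B.
  by rewrite -has_count; apply/hasP; exists y => //; rewrite leqnn /= -ltnNge.
have := D y.
rewrite E subn0; lia.
Qed.

Definition colsOK (cols : seq (seq nat)) := forall c,
  [/\ uniq (nth [::] cols c), all (fun x => 0 < x) (nth [::] cols c)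
    & dom (nth [::] cols c.+1) (nth [::] cols c)].

Lemma count_ge0 (s : seq nat) : count (fun x => 0 <= x) s = size s.
Proof. by rewrite (eq_count (a2 := predT)) ?count_predT. Qed.

Lemma G1 fuel : forall cols, colsOK cols -> size (nth [::] cols 0) <= fuel ->
  exists R, [/\ psi_rows fuel cols = Some R, GR R &
             forall c, perm_eq (col R c) (nth [::] cols c)].
Proof.
elim: fuel => [|n IH] cols OK hf.
all: have [E|tcn] := eqVneq (trim cols) [::].
all: try (exists [::]; split; [exact: psi_rows_nil | by split | ];
          by move=> c; rewrite -trim_nth E nth_nil /col).
all: set tc := trim cols; set k := size tc.
all: have kpos : 0 < k by rewrite lt0n size_eq0.
all: have Ntc : forall c, nth [::] cols c = nth [::] tc c by move=> c; rewrite trim_nth.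
all: have Nge : forall c, k <= c -> nth [::] cols c = [::]
       by move=> c h; rewrite Ntc nth_default.
all: have Nlast : nth [::] cols k.-1 != [::]
       by rewrite Ntc nth_last; apply: trim_last.
all: have Sdec : forall c d, size (nth [::] cols (c + d)) <= size (nth [::] cols c)
       by move=> c; elim=> [|d IHd]; rewrite ?addn0 // addnS;
          apply: leq_trans IHd; have [_ _ D] := OK (c + d); have := D 0; rewrite !count_ge0.
all: have Nne : forall c, c < k -> nth [::] cols c != [::].
all: try (move=> c hc; rewrite -size_eq0 -lt0n; apply: leq_trans (Sdec c (k.-1 - c));
       rewrite subnKC ?lt0n ?size_eq0 //; lia).
all: try (by exfalso; move: hf; rewrite leqn0 size_eq0 (negbTE (Nne 0 kpos))).
have [ys P] : exists ys, pick_chain 0 (rev tc) = Some ys.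
  apply: pick_exists.
    move=> j; rewrite size_rev => hj.
    rewrite !nth_rev ?size_rev //; last by lia.
    have -> : k - j.+1 = (k - j.+2).+1 by lia.
    rewrite -!Ntc; by have [_ _ D] := OK (k - j.+2).
  case E2: (rev tc) => [|C rcs] //.
  have : nth [::] (rev tc) 0 = nth [::] tc k.-1 by rewrite nth_rev // subn1.
  rewrite E2 /= -Ntc => EC; rewrite EC.
  move: Nlast; case: (nth [::] cols k.-1) => // x l _; by apply/hasP; exists x; rewrite ?mem_head.
have /pick_gr Ga := P.
set a := rev ys in Ga.
have [sa Gc] := Ga.
set cols' := map (fun p => rem p.1 p.2) (zip a tc).
have N' : forall c, nth [::] cols' c = rem (nth 0 a c) (nth [::] cols c).
  by move=> c; rewrite nth_newcols // Ntc.
have amem : forall c, c < k -> nth 0 a c \in nth [::] cols c.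
  by move=> c hc; have [h _ _] := Gc c hc; rewrite Ntc.
have OK' : colsOK cols'.
  move=> c; rewrite !N'; have [U Pos D] := OK c; split.
  - exact: rem_uniq.
  - by apply/allP => x /mem_rem /(allP Pos).
  - case: (ltnP c.+1 k) => hc.
      have [h1 h2 h3] := Gc c (ltnW hc).
      by apply: dom_step => //; [exact: (amem _ (ltnW hc)) | exact: (amem _ hc) | move=> z zA; apply: h3; rewrite -Ntc].
    by rewrite Nge // => t.
have hf' : size (nth [::] cols' 0) <= n.
  rewrite N' size_rem; last exact: amem.
  by move: hf; case: (size _).
have [R' [PR' GR' PC']] := IH cols' OK' hf'.
exists (a :: R'); split.
- by rewrite (psi_rows_cons n tcn P) -/tc -/a -/cols' PR'.
- have [GR1 GR2 GR3] := GR'.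
  have colR : forall b c, b \in R' -> c < size b ->
      nth 0 b c \in nth [::] tc c /\ nth 0 b c != nth 0 a c.
    move=> b c bR hc; have := mem_col bR hc; rewrite (perm_mem (PC' c)) N'.
    have [U _ _] := OK c; rewrite (mem_rem_uniq _ U) inE => /andP[-> h].
    by rewrite -Ntc.
  have sizeR : forall b, b \in R' -> size b <= k.
    move=> b bR; have [bn _ _] := GR1 b bR.
    have hb : (size b).-1 < size b by rewrite prednK // lt0n size_eq0.
    have [h _] := colR b _ bR hb.
    case: (ltnP (size b).-1 k) => hk; first by lia.
    by rewrite -Ntc Nge in h.
  have SR : forall b, b \in R' -> sorted geq b by move=> b /GR1 [].
  split.
  + move=> r; rewrite inE => /orP[/eqP->|]; last exact: GR1.
    split.
    * by rewrite -size_eq0 sa -/k -lt0n.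
    * apply/(sortedP 0) => c hc; rewrite sa in hc; by have [_ h _] := Gc c (ltnW hc).
    * apply/allP => x /(nthP 0) [c hc <-]; rewrite sa in hc.
      by have [_ Pos _] := OK c; apply: (allP Pos); apply: amem.
  + rewrite /= GR2 andbT; apply/mapP => [[b bR hb]].
    have [bn _ _] := GR1 b bR.
    have hb0 : 0 < size b by rewrite lt0n size_eq0.
    have [_] := colR b 0 bR hb0.
    by rewrite !nth0 hb eqxx.
  + move=> r s; rewrite !inE => /orP[/eqP->|rR] /orP[/eqP->|sR].
    * by move=> h; move: h; rewrite ltnn.
    * by have [] := add_row Ga (SR s sR) (sizeR s sR) (colR s ^~ sR).
    * by have [] := add_row Ga (SR r rR) (sizeR r rR) (colR r ^~ rR).
    * exact: GR3.
- move=> c; rewrite col_cons sa -/k.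
  case: (ltnP c k) => hc.
    apply: (@perm_trans _ (nth 0 a c :: rem (nth 0 a c) (nth [::] cols c))).
      by rewrite perm_cons -N'.
    by rewrite perm_sym perm_to_rem // amem.
  by rewrite (perm_trans (PC' c)) // N' Nge.
Qed.

Lemma GR_sub R R' : GR R -> {subset R' <= R} -> uniq (map (head 0) R') -> GR R'.
Proof.
move=> [G1 G2 G3] S U; split => //.
- by move=> r /S; apply: G1.
- by move=> r s /S h1 /S h2; apply: G3.
Qed.

Lemma col_nil X c : (forall q, q \in X -> size q <= c) -> col X c = [::].
Proof.
move=> H; apply/eqP; rewrite -size_eq0 size_col; apply/eqP/eqP.
rewrite -leqn0 leqNgt -has_count; apply/hasPn => q hq; rewrite -leqNgt; exact: H.
Qed.

Lemma col_rem_perm R0 p c : p \in R0 -> (forall q, q \in R0 -> size q <= size p) ->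
  perm_eq (rem (nth 0 p c) (col R0 c)) (col (rem p R0) c).
Proof.
move=> pR Hs.
case: (ltnP c (size p)) => hc.
  have := perm_rem (nth 0 p c) (perm_col c (perm_to_rem pR)).
  by rewrite col_cons hc /= eqxx.
rewrite !col_nil //.
- by move=> q /mem_rem qR; apply: leq_trans (Hs q qR) hc.
- by move=> q qR; apply: leq_trans (Hs q qR) hc.
Qed.

Lemma G2 fuel : forall cols R0, GR R0 ->
  (forall c, perm_eq (nth [::] cols c) (col R0 c)) -> size R0 <= fuel ->
  exists R, psi_rows fuel cols = Some R /\ perm_eq R R0.
Proof.
elim: fuel => [|n IH] cols R0 G PC hf.
all: have NE : all (fun r => r != [::]) R0 by apply/allP => r rR; case: G => /(_ r rR) [].
all: have [E|tcn] := eqVneq (trim cols) [::].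
all: try (exists [::]; split; [exact: psi_rows_nil |];
  have : size (col R0 0) = 0 by rewrite -(perm_size (PC 0)) -trim_nth E nth_nil);
  try (by rewrite col0_shape // => /size0nil ->).
all: set tc := trim cols; set k := size tc.
all: have kpos : 0 < k by rewrite lt0n size_eq0.
all: have Ntc : forall c, nth [::] cols c = nth [::] tc c by move=> c; rewrite trim_nth.
all: have Nge : forall c, k <= c -> nth [::] cols c = [::]
       by move=> c h; rewrite Ntc nth_default.
all: have Nlast : nth [::] cols k.-1 != [::]
       by rewrite Ntc nth_last; apply: trim_last.
all: have Cge : forall c, k <= c -> col R0 c = [::]
       by move=> c h; apply/eqP; rewrite -size_eq0 -(perm_size (PC c)) Nge.
all: have Hs : forall q, q \in R0 -> size q <= k
       by move=> q qR; rewrite leqNgt; apply/negP => h;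
          have := mem_col qR h; rewrite Cge.
all: have [q qR qk] : exists2 q, q \in R0 & size q = k.
all: try (have : col R0 k.-1 != [::] by rewrite -size_eq0 -(perm_size (PC _)) size_eq0);
     try (case E2: (col R0 k.-1) => [|x l] // _;
          have : x \in col R0 k.-1 by rewrite E2 mem_head);
     try (move=> /colP [q qR [hq _]]; exists q => //; apply/anti_leq; rewrite Hs //; lia).
all: try (by exfalso; move: hf; rewrite leqn0 size_eq0 => /eqP E0; rewrite E0 in qR).
have exP : exists m, has (fun r => (size r == k) && (head 0 r == m)) R0.
  by exists (head 0 q); apply/hasP; exists q => //; rewrite qk !eqxx.
case: (ex_minnP exP) => m /hasP [p pR /andP[/eqP pk /eqP pm]] Hm.
have Hh : forall q, q \in R0 -> size q = size p -> head 0 p <= head 0 q.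
  move=> q' q'R hq'; rewrite pm; apply: Hm; apply/hasP; exists q' => //.
  by rewrite hq' pk !eqxx.
have Hs' : forall q, q \in R0 -> size q <= size p by move=> q' /Hs; rewrite pk.
have LL := llrow G pR Hs' Hh.
have Ga : gr (rev (rev p)) tc.
  rewrite revK; split; first by rewrite pk.
  move=> c hc; split.
  - by rewrite -Ntc (perm_mem (PC c)); apply: mem_col => //; rewrite pk.
  - case: (ltnP c.+1 (size p)) => h; last by rewrite nth_default.
    by apply: sgeq_nth => //; case: G => /(_ p pR) [].
  - move=> y; rewrite -Ntc (perm_mem (PC c)); apply: LL; by rewrite pk.
have /pick_gr P := Ga.
rewrite (psi_rows_cons n tcn P) revK -/tc.
set cols' := map (fun p => rem p.1 p.2) (zip p tc).
have PC' : forall c, perm_eq (nth [::] cols' c) (col (rem p R0) c).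
  move=> c; rewrite nth_newcols ?pk // -Ntc.
  apply: perm_trans (col_rem_perm c pR Hs').
  exact: perm_rem.
have G' : GR (rem p R0).
  have U : uniq (map (head 0) R0) by case: G.
  exact: (GR_sub G (mem_rem (s:=R0)) (subseq_uniq (map_subseq _ (rem_subseq _ _)) U)).
have hf' : size (rem p R0) <= n by move: hf; rewrite size_rem //; case: (size R0).
have [R' [-> PR']] := IH cols' (rem p R0) G' PC' hf'.
exists (p :: R'); split => //.
apply: (@perm_trans _ (p :: rem p R0)); first by rewrite perm_cons.
by rewrite perm_sym perm_to_rem.
Qed.

Definition rowof (R : seq (seq nat)) i := nth [::] R (find (fun r => head 0 r == i) R).

Lemma rowof_spec R i :
  (rowof R i = [::] /\ forall r, r \in R -> head 0 r != i) \/
  (rowof R i \in R /\ head 0 (rowof R i) = i).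
Proof.
case: (boolP (has (fun r => head 0 r == i) R)) => h.
  right; split; first by rewrite /rowof mem_nth // -has_find.
  by apply/eqP; apply: (nth_find [::] h).
left; split; first by rewrite /rowof nth_default // leqNgt -has_find.
by move=> r rR; apply/negP => e; move/hasPn: h => /(_ r rR); rewrite e.
Qed.

Lemma rowof_eq R r : uniq (map (head 0) R) -> r \in R -> rowof R (head 0 r) = r.
Proof.
move=> U rR; case: (rowof_spec R (head 0 r)) => [[_ /(_ r rR)]|[h1 h2]].
  by rewrite eqxx.
exact: (uniq_map_inj U).
Qed.

Lemma foldr_max_le (s : seq nat) b : (forall x, x \in s -> x <= b) -> foldr maxn 0 s <= b.
Proof.
elim: s => [|x s IH] //= H; rewrite geq_max H ?mem_head //=.
by apply: IH => y ys; apply: H; rewrite inE ys orbT.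
Qed.

Lemma frow_place R i : 0 < i -> frow (place_rows R) i = rowof R i.
Proof.
move=> ip; rewrite /frow /place_rows.
case: (ltnP i.-1 (foldr maxn 0 (map (head 0) R))) => h.
  by rewrite nth_mkseq // prednK.
rewrite nth_default ?size_mkseq //.
case: (rowof_spec R i) => [[-> //]|[h1 h2]].
move: h; rewrite -ltnS prednK // => h.
have := le_foldr_max (map_f (head 0) h1); rewrite h2 => h3.
by move: h; rewrite ltnNge h3.
Qed.

Lemma size_place R : size (place_rows R) = foldr maxn 0 (map (head 0) R).
Proof. by rewrite /place_rows size_mkseq. Qed.

Lemma GR_rowof R i : GR R -> rowof R i != [::] -> rowof R i \in R /\ head 0 (rowof R i) = i.
Proof. by move=> _; case: (rowof_spec R i) => [[->]|]. Qed.

Lemma place_qKT1 R : GR R -> qKT1 (place_rows R).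
Proof.
move=> G; have [G1 G2 G3] := G.
set F := place_rows R.
have cellP : forall i c, fcell F i c ->
    [/\ 0 < i, 0 < c, c <= size (rowof R i), rowof R i \in R & head 0 (rowof R i) = i].
  move=> i c /andP[/andP[ip _] /andP[cp]]; rewrite frow_place // => cs.
  have ne : rowof R i != [::] by rewrite -size_eq0 -lt0n; exact: leq_trans cp cs.
  by have [h1 h2] := GR_rowof G ne; split.
have cellF : forall i c, fcell F i c -> i <= size F by move=> i c /andP[/andP[]].
have fentE : forall i c, 0 < i -> fent F i c = nth 0 (rowof R i) c.-1.
  by move=> i c ip; rewrite /fent frow_place.
have fcellS : forall i c, 0 < i -> i <= size F -> 0 < c -> c <= size (rowof R i) -> fcell F i c.
  by move=> i c h1 h2 h3 h4; rewrite /fcell h1 h2 h3 frow_place.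
split; [split; [|split; [|split; [|split; [|split]]]]|split].
- move=> i c /cellP [ip cp cs rR rh]; rewrite fentE //.
  have [_ S Pos] := G1 _ rR.
  have m : nth 0 (rowof R i) c.-1 \in rowof R i by apply: mem_nth; rewrite prednK.
  have := sgeq_head S m; rewrite rh => hle.
  by have := allP Pos _ m; rewrite /= hle andbT.
- move=> i; case: (posnP i) => [->|ip].
    rewrite /frow /=; have := frow_place R (ltn0Sn 0); rewrite /frow /= => ->.
    by case: (rowof_spec R 1) => [[->]|[h _]] //; case: (G1 _ h).
  rewrite frow_place //; case: (rowof_spec R i) => [[->]|[h _]] //; by case: (G1 _ h).
- move=> i j c /cellP [ip cp cs rR rh] /cellP [jp _ cs' sR sh] ij.
  rewrite !fentE //.
  case: (ltngtP i j) => h.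
  + have := G3 _ _ rR sR; rewrite /compat rh sh => /(_ h) [D _ _].
    by apply: D; rewrite prednK.
  + have := G3 _ _ sR rR; rewrite /compat rh sh => /(_ h) [D _ _].
    by rewrite eq_sym; apply: D; rewrite prednK.
  + by rewrite h eqxx in ij.
- move=> i j ij /cellP [ip _ _ _ rh] /cellP [jp _ _ _ sh].
  by rewrite !fentE // !nth0 rh sh.
- move=> p q c pq hp /cellP [qp _ cs' sR sh] h.
  have pF := cellF _ _ hp; move: hp => /cellP [pp cp cs rR rh].
  have := G3 _ _ rR sR; rewrite /compat rh sh => /(_ pq) [_ C3 _].
  rewrite !fentE // in h *.
  have [h1 h2] := C3 c.-1 ltac:(by rewrite prednK) ltac:(by rewrite prednK) h.
  rewrite prednK // in h1 h2; rewrite fcellS //=.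
- move=> p q c pq hs hp hq; have pF := cellF _ _ hp.
  move: hp hq => /cellP [pp cp cs rR rh] /cellP [qp _ cs' sR sh].
  have := G3 _ _ rR sR; rewrite /compat rh sh => /(_ pq) [_ _ C4].
  rewrite !frow_place // in hs; rewrite !fentE //=.
  have := C4 hs c.-1 ltac:(by rewrite prednK) ltac:(by rewrite prednK).
  by rewrite prednK.
- rewrite /F /place_rows.
  case: (posnP (foldr maxn 0 (map (head 0) R))) => [->|M0]; first by left.
  right; rewrite (last_nth [::]) size_mkseq.
  have := foldr_max_mem M0 => /mapP [r rR rE].
  rewrite -(prednK M0) /= nth_mkseq ?prednK // -/(rowof R _) ?prednK // rE rowof_eq //.
  by case: (G1 r rR) => /eqP.
- move=> i hc; have := cellP _ _ hc => [[ip _ _ _ rh]].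
  by rewrite fentE // nth0.
Qed.

Lemma col_filter X c : col [seq r <- X | r != [::]] c = col X c.
Proof.
elim: X => [|r X IH] //=; case: ifP => h; rewrite ?col_cons IH //.
by move/negbFE: h => /eqP ->.
Qed.

Lemma size_col_sumn X c : size (col X c) <= sumn (map size X).
Proof.
elim: X => [|r X IH] //=; rewrite col_cons; case: ifP => h /=.
  by rewrite -addn1 addnC; apply: leq_add => //; apply: leq_ltn_trans h.
exact: leq_trans IH (leq_addl _ _).
Qed.

Lemma GR_head_pos R r : GR R -> r \in R -> 0 < head 0 r.
Proof.
move=> [G1 _ _] rR; have [ne _ Pos] := G1 r rR.
by case: r ne Pos {rR} => // x r _ /andP[].
Qed.

Lemma perm_place R c : GR R -> perm_eq (col (place_rows R) c) (col R c).
Proof.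
move=> G; have [G1 G2 G3] := G.
rewrite -col_filter; apply: perm_col; apply: uniq_perm.
- apply: (@map_uniq _ _ (head 0)).
  rewrite /place_rows /mkseq filter_map -map_comp.
  set s := filter _ _.
  have -> : map (head 0 \o (fun i => nth [::] R (find (fun r => head 0 r == i.+1) R))) s = map succn s.
    apply/eq_in_map => i; rewrite mem_filter => /andP[h _] /=.
    by have [_ ->] := GR_rowof G h.
  by rewrite map_inj_uniq ?filter_uniq ?iota_uniq //; move=> a b [].
- exact: map_uniq G2.
move=> r; rewrite mem_filter; apply/idP/idP.
  move=> /andP[ne /mapP [i _ E]]; rewrite E in ne *; by have [] := GR_rowof G ne.
move=> rR; have [ne _ _] := G1 r rR; rewrite ne /=.
have hp := GR_head_pos G rR.
have hM := le_foldr_max (map_f (head 0) rR).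
have := frow_place R hp; rewrite rowof_eq // /frow => <-.
by apply: mem_nth; rewrite size_place; rewrite prednK.
Qed.

Lemma GR_col_uniq R c : GR R -> uniq (col R c).
Proof.
elim: R => [|r R IH] // G.
have [G1 G2 G3] := G.
have G' : GR R.
  apply: GR_sub G _ _; first by move=> x xR; rewrite inE xR orbT.
  by case/andP: G2.
rewrite col_cons; case: ifP => hc; last exact: IH.
rewrite /= IH // andbT; apply/negP => /colP [s sR [hs E]].
have hne : head 0 r != head 0 s.
  apply/eqP => e; case/andP: G2 => /negP H _; apply: H; rewrite e; exact: map_f.
have rR : r \in r :: R by rewrite mem_head.
have sR' : s \in r :: R by rewrite inE sR orbT.
case: (ltngtP (head 0 r) (head 0 s)) => h.
- by have [D _ _] := G3 r s rR sR' h; move/negP: (D c hc hs); rewrite E.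
- by have [D _ _] := G3 s r sR' rR h; move/negP: (D c hs hc); rewrite E.
- by rewrite h eqxx in hne.
Qed.

Lemma fcellT T j c : j < size T -> c < size (nth [::] T j) -> fcell T j.+1 c.+1.
Proof. by move=> h1 h2; rewrite /fcell /frow /= h1 h2. Qed.

Lemma fentT T j c : fent T j.+1 c.+1 = nth 0 (nth [::] T j) c.
Proof. by []. Qed.

Lemma head_T T j : qKT1 T -> j < size T -> nth [::] T j != [::] ->
  head 0 (nth [::] T j) = j.+1.
Proof.
move=> [_ [_ H]] hj ne; rewrite -nth0 -fentT; apply: H; apply: fcellT => //.
by rewrite lt0n size_eq0.
Qed.

Lemma memT (T : seq (seq nat)) (r : seq nat) : r \in T -> exists2 j, j < size T & r = nth [::] T j.
Proof. by move=> /(nthP [::]) [j hj <-]; exists j. Qed.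

Lemma GR_T T : qKT1 T -> GR [seq r <- T | r != [::]].
Proof.
move=> Q; have [[Q1 [Q2 [Q3 [Q4 [Q5 Q6]]]]] [Q7 Q8]] := Q.
split.
- move=> r; rewrite mem_filter => /andP[ne /memT [j hj E]]; split => //.
    by have := Q2 j.+1; rewrite /frow /= -E.
  apply/allP => x /(nthP 0) [c hc <-].
  have := Q1 j.+1 c.+1; rewrite fentT -E => /(_ (fcellT hj _)).
  by rewrite -E => /(_ hc) /andP[].
- have -> : [seq r <- T | r != [::]] =
    map (nth [::] T) [seq j <- iota 0 (size T) | nth [::] T j != [::]].
    by rewrite -{1}(mkseq_nth [::] T) /mkseq filter_map.
  rewrite -map_comp; set s := filter _ _.
  have -> : map (head 0 \o nth [::] T) s = map succn s.
    apply/eq_in_map => j; rewrite mem_filter mem_iota add0n => /andP[ne /andP[_ hj]] /=.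
    exact: head_T.
  by rewrite map_inj_uniq ?filter_uniq ?iota_uniq //; move=> a b [].
move=> r s; rewrite !mem_filter => /andP[rn /memT [j hj Er]] /andP[sn /memT [j' hj' Es]].
rewrite /compat Er Es !head_T -?Er -?Es // ltnS => jj.
have cr : forall c, c < size r -> fcell T j.+1 c.+1 by move=> c; rewrite Er; apply: fcellT.
have cs : forall c, c < size s -> fcell T j'.+1 c.+1 by move=> c; rewrite Es; apply: fcellT.
split.
- move=> c h1 h2; have := Q3 j.+1 j'.+1 c.+1 (cr c h1) (cs c h2).
  by rewrite !fentT -Er -Es; apply; rewrite eqSS neq_ltn jj.
- move=> c h1 h2 h; have := Q5 j.+1 j'.+1 c.+1 jj (cr c h1) (cs c h2).
  rewrite !fentT -Er -Es => /(_ h) /andP[h3 h4]; split => //.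
  by move: h3; rewrite /fcell /frow /= -Er => /andP[_].
- move=> hs c h1 h2; have := Q6 j.+1 j'.+1 c.+1 jj.
  rewrite /frow /= -Er -Es => /(_ hs (cr c h1) (cs c.+1 h2)).
  by rewrite !fentT -Er -Es.
Qed.

Lemma place_T T R : qKT1 T -> GR R -> R =i [seq r <- T | r != [::]] -> place_rows R = T.
Proof.
move=> Q G ER.
have [G1 G2 G3] := G.
have inR : forall r, r \in R -> exists2 j, j < size T & r = nth [::] T j /\ head 0 r = j.+1.
  move=> r; rewrite ER mem_filter => /andP[ne /memT [j hj E]]; exists j => //.
  by split => //; rewrite E head_T // -E.
have sz : size (place_rows R) = size T.
  rewrite size_place; apply/anti_leq/andP; split.
    apply: foldr_max_le => x /mapP [r rR ->].
    by have [j hj [_ ->]] := inR r rR.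
  have [_ [HL _]] := Q; case: HL => [->//|HL].
  have hn : 0 < size T by case: (T) HL.
  have hl : (size T).-1 < size T by rewrite prednK.
  have ne : nth [::] T (size T).-1 != [::] by rewrite nth_last; apply/eqP.
  have xR : nth [::] T (size T).-1 \in R by rewrite ER mem_filter ne mem_nth.
  have := le_foldr_max (map_f (head 0) xR).
  by rewrite head_T // prednK.
apply: (eq_from_nth (x0 := [::])) => // j hj.
rewrite sz in hj.
have := frow_place R (ltn0Sn j); rewrite /frow /= => ->.
case: (boolP (nth [::] T j != [::])) => ne.
  have rR : nth [::] T j \in R by rewrite ER mem_filter ne mem_nth.
  by rewrite -{1}(head_T Q hj ne) rowof_eq.
move/negbNE/eqP: ne => ne; rewrite ne.
case: (rowof_spec R j.+1) => [[->]|[h1 h2]] //.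
have [j' hj' [E1 E2]] := inR _ h1.
rewrite E2 in h2; case: h2 => e; rewrite e in E1.
have := h1; rewrite ER mem_filter => /andP[]; by rewrite E1 ne.
Qed.

Theorem theorem5p8 :
  (* psi is well defined on revSSYT, lands in qKT^(1), preserves column sets,
     and phi inverts it *)
  (forall V : seq (seq nat), revSSYT V ->
     exists F, psi V = Some F /\ qKT1 F /\
       (forall c, colset F c =i colset V c) /\ phi F = V) /\
  (* phi maps qKT^(1) into revSSYT, preserves column sets, and psi inverts it *)
  (forall T : seq (seq nat), qKT1 T ->
     revSSYT (phi T) /\ (forall c, colset (phi T) c =i colset T c) /\
     psi (phi T) = Some T).
Proof.
split.
  move=> V RV.
  have [nV sV pV rV cV] := RV.
  set cols := mkseq (fun c => colset V c.+1) (ncols V).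
  have Nc : forall c, nth [::] cols c = col V c by move=> c; apply: nth_colsmk.
  have OK : colsOK cols.
    move=> c; rewrite !Nc; split.
    - exact: revSSYT_col_uniq.
    - apply/allP => x /colP [r rV' [hc ->]].
      by have := allP pV r rV' => /allP; apply; apply: mem_nth.
    - by move=> t; apply: dom_col => r rV'; apply: (allP rV).
  have hf : size (nth [::] cols 0) <= sumn (map size V) by rewrite Nc size_col_sumn.
  have [R [PR G PC]] := G1 OK hf.
  have UH : uniq (map (head 0) R) by case: G.
  have AH : all (fun r => 0 < head 0 r) R by apply/allP => r; apply: GR_head_pos.
  have PC2 : forall c, perm_eq (col (place_rows R) c) (col V c).
    by move=> c; rewrite -Nc; apply: perm_trans (perm_place c G) (PC c).
  exists (place_rows R); split; first by rewrite /psi -/cols PR UH AH.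
  split; first exact: place_qKT1.
  split; last exact: phi_eq_V.
  by case=> [|c]; rewrite ?colset0 // !colsetS; apply: perm_mem.
move=> T Q.
have [[Q1 [Q2 _]] _] := Q.
set R0 := [seq r <- T | r != [::]].
have G0 := GR_T Q.
have CT : forall c, col T c = col R0 c by move=> c; rewrite col_filter.
have ST : forall r, r \in T -> sorted geq r.
  by move=> r /memT [j hj ->]; have := Q2 j.+1.
have UT : forall c, uniq (col T c) by move=> c; rewrite CT; apply: GR_col_uniq.
have PT : forall c, all (fun x => 0 < x) (col T c).
  move=> c; apply/allP => x /colP [r /memT [j hj E] [hc ->]].
  have := Q1 j.+1 c.+1; rewrite fentT -E => /(_ (fcellT hj _)).
  by rewrite -E => /(_ hc) /andP[].
split; first exact: revSSYT_phi.
split.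
  by case=> [|c]; rewrite ?colset0 // !colsetS col_phi => x; rewrite mem_sort.
set cols := mkseq (fun c => colset (phi T) c.+1) (ncols (phi T)).
have PC : forall c, perm_eq (nth [::] cols c) (col R0 c).
  by move=> c; rewrite nth_colsmk col_phi -CT perm_sort.
have NE : all (fun r => r != [::]) R0 by apply/allP => r; rewrite mem_filter => /andP[].
have hf : size R0 <= sumn (map size (phi T)).
  rewrite -col0_shape // -CT.
  by apply: leq_trans (size_col_sumn (phi T) 0); rewrite col_phi size_sort.
have [R [PR PRR]] := G2 G0 PC hf.
have UH : uniq (map (head 0) R).
  by rewrite (perm_uniq (perm_map _ PRR)); case: G0.
have GR1 : GR R by apply: GR_sub G0 _ UH => r; rewrite (perm_mem PRR).
have AH : all (fun r => 0 < head 0 r) R by apply/allP => r; apply: GR_head_pos.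
rewrite /psi -/cols PR UH AH /=.
by rewrite (place_T Q GR1) // => r; rewrite (perm_mem PRR).
Qed.
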